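(* Let $(I,\le)$ be a totally ordered set with smallest element $0$, and let $\{G_i,\pi_{ij}\}$ be a direct system of finitely generated groups indexed by $I$ with surjective homomorphisms $\pi_{ij}:G_i\to G_j$ for all $j\ge i$ (with $\pi_{ii}=\mathrm{id}$ and $\pi_{jk}\circ\pi_{ij}=\pi_{ik}$). Let $G_\infty=\varinjlim G_i$, let $G=G_0$, let $\varphi_i=\pi_{0i}:G\to G_i$, let $\varphi:G\to G_\infty$ be the canonical (surjective) map, and for a subgroup $H\le G$ put $H_i=\varphi_i(H)$. Fix a prime $p$. Then for each normal subgroup $K\trianglelefteq G_\infty$ of $p$-power index there exists a normal subgroup $H'\trianglelefteq G$ of $p$-power index such that: (1) $K=\varinjlim H'_i$ (i.e. $K=\varphi(H')$ is the direct limit of the subgroups $H'_i$ under the restricted maps $\pi_{ij}$); (2) $[G_\infty:K]=\lim_{i\in I}[G_i:H'_i]$; (3) $d_p(K)=\lim_{i\in I}d_p(H'_i)$.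
   Context: For a group $A$, $d(A)$ is the minimal number of generators and $d_p(A)=d\big(A/[A,A]A^p\big)$. Limits over $i\in I$ are taken along the total order of $I$. *)

(* Defs.v *)
From mathcomp Require Import ssreflect ssrbool ssrnat prime.
From Stdlib Require Import List.

Set Implicit Arguments.
Unset Strict Implicit.

Record group : Type := Group {
  gcar :> Type;
  gmul : gcar -> gcar -> gcar;
  gone : gcar;
  ginv : gcar -> gcar;
  gmulA : forall x y z, gmul x (gmul y z) = gmul (gmul x y) z;
  gmul1x : forall x, gmul gone x = x;
  gmulx1 : forall x, gmul x gone = x;
  gmulVx : forall x, gmul (ginv x) x = gone;
  gmulxV : forall x, gmul x (ginv x) = gone }.

Arguments gmul {g}.
Arguments gone {g}.
Arguments ginv {g}.

Section Groups.
Variable G : group.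

Fixpoint gpow (x : G) (n : nat) : G :=
  match n with O => gone | S m => gmul x (gpow x m) end.

Definition gcomm (x y : G) : G := gmul (ginv x) (gmul (ginv y) (gmul x y)).

Definition subgroup (H : G -> Prop) : Prop :=
  H gone /\ (forall x y, H x -> H y -> H (gmul x y)) /\ (forall x, H x -> H (ginv x)).

Definition normal_sub (N : G -> Prop) : Prop :=
  subgroup N /\ forall g x, N x -> N (gmul (ginv g) (gmul x g)).

Definition gen (S : G -> Prop) : G -> Prop :=
  fun x => forall H, subgroup H -> (forall y, S y -> H y) -> H x.

Definition fin_gen : Prop :=
  exists l : list G, forall x, gen (fun y => In y l) x.

(** [index H n] : H has exactly n left cosets in G, i.e. [G:H] = n. *)
Definition index (H : G -> Prop) (n : nat) : Prop :=
  exists l : list G, length l = n /\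
    (forall x, exists y, In y l /\ H (gmul (ginv y) x)) /\
    (forall i j, i < n -> j < n ->
        H (gmul (ginv (nth i l gone)) (nth j l gone)) -> i = j).

Definition p_power_index (p : nat) (H : G -> Prop) : Prop :=
  exists k, index H (p ^ k).

(** generators of the verbal subgroup [A,A]A^p of A *)
Definition frat_gens (p : nat) (A : G -> Prop) : G -> Prop :=
  fun z => (exists x y, A x /\ A y /\ z = gcomm x y) \/ (exists x, A x /\ z = gpow x p).

(** [l] (elements of A) generates A/[A,A]A^p, i.e. A = <l>[A,A]A^p *)
Definition gens_mod_frat (p : nat) (A : G -> Prop) (l : list G) : Prop :=
  (forall a, In a l -> A a) /\
  (forall x, A x -> gen (fun z => In z l \/ frat_gens p A z) x).

(** [dp p A n] : d_p(A) = d(A/[A,A]A^p) = n *)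
Definition dp (p : nat) (A : G -> Prop) (n : nat) : Prop :=
  (exists l, length l = n /\ gens_mod_frat p A l) /\
  (forall l, gens_mod_frat p A l -> n <= length l).

End Groups.

Definition is_hom (G H : group) (f : G -> H) : Prop :=
  forall x y, f (gmul x y) = gmul (f x) (f y).

Definition img (G H : group) (f : G -> H) (A : G -> Prop) : H -> Prop :=
  fun y => exists x, A x /\ f x = y.

Definition total_order_bot (I : Type) (le : I -> I -> Prop) (i0 : I) : Prop :=
  (forall i, le i i) /\
  (forall i j, le i j -> le j i -> i = j) /\
  (forall i j k, le i j -> le j k -> le i k) /\
  (forall i j, le i j \/ le j i) /\
  (forall i, le i0 i).

Definition surj_direct_system (I : Type) (le : I -> I -> Prop)
    (G : I -> group) (pi : forall i j, G i -> G j) : Prop :=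
  (forall i j, le i j -> is_hom (pi i j)) /\
  (forall i j, le i j -> forall y : G j, exists x, pi i j x = y) /\
  (forall i (x : G i), pi i i x = x) /\
  (forall i j k, le i j -> le j k -> forall x, pi j k (pi i j x) = pi i k x).

(** (Ginf, psi) is the direct limit: the disjoint union of the G_i modulo
    x ~ y iff they become equal in some later G_k, with the induced group law. *)
Definition is_direct_limit (I : Type) (le : I -> I -> Prop)
    (G : I -> group) (pi : forall i j, G i -> G j)
    (Ginf : group) (psi : forall i, G i -> Ginf) : Prop :=
  (forall i, is_hom (psi i)) /\
  (forall i j, le i j -> forall x, psi j (pi i j x) = psi i x) /\
  (forall z : Ginf, exists i x, psi i x = z) /\
  (forall i j (x : G i) (y : G j),
      psi i x = psi j y <-> exists k, le i k /\ le j k /\ pi i k x = pi j k y).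

(** limit over a totally ordered index set of a nat-valued family (discrete):
    the family is eventually constant, here expressed for a relation-valued quantity *)
Definition eventually (I : Type) (le : I -> I -> Prop) (P : I -> Prop) : Prop :=
  exists i1, forall i, le i1 i -> P i.

Arguments surj_direct_system {I} le G pi.
Arguments is_direct_limit {I} le G pi Ginf psi.

(* Main.v *)
Require Import Defs.
From mathcomp Require Import ssreflect ssrbool ssrnat prime.
From mathcomp Require Import eqtype.
From Stdlib Require Import List Classical.
Set Implicit Arguments.
Unset Strict Implicit.

Section GL.
Variable G : group.
Implicit Types x y z : G.

Lemma mulKg x y : gmul (ginv x) (gmul x y) = y.
Proof. by rewrite gmulA gmulVx gmul1x. Qed.
Lemma mulKVg x y : gmul x (gmul (ginv x) y) = y.
Proof. by rewrite gmulA gmulxV gmul1x. Qed.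
Lemma mulgK x y : gmul (gmul y x) (ginv x) = y.
Proof. by rewrite -gmulA gmulxV gmulx1. Qed.
Lemma mulg_canl x y z : gmul x y = gmul x z -> y = z.
Proof. move=> E. by rewrite -(mulKg x y) E mulKg. Qed.
Lemma inv_uniq x y : gmul x y = gone -> y = ginv x.
Proof. move=> E. apply: (mulg_canl (x:=x)). by rewrite E gmulxV. Qed.
Lemma invgK x : ginv (ginv x) = x.
Proof. symmetry; apply: inv_uniq; apply gmulVx. Qed.
Lemma invMg x y : ginv (gmul x y) = gmul (ginv y) (ginv x).
Proof. symmetry. apply: inv_uniq. by rewrite -gmulA mulKVg gmulxV. Qed.
Lemma inv1 : ginv (@gone G) = gone.
Proof. symmetry; apply inv_uniq; apply gmul1x. Qed.

Lemma sg1 (H : G -> Prop) : subgroup H -> H gone.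
Proof. by case. Qed.
Lemma sgM (H : G -> Prop) x y : subgroup H -> H x -> H y -> H (gmul x y).
Proof. by case=> _ [M _]; apply M. Qed.
Lemma sgV (H : G -> Prop) x : subgroup H -> H x -> H (ginv x).
Proof. by case=> _ [_ V]; apply V. Qed.
Lemma sgVr (H : G -> Prop) x : subgroup H -> H (ginv x) -> H x.
Proof. move=> HH Hx. rewrite -(invgK x). by apply sgV. Qed.

Lemma gen_sub (S : G -> Prop) : subgroup (gen S).
Proof.
split; [|split].
- move=> H HH _; exact: sg1.
- move=> x y Hx Hy H HH HS. apply: sgM => //; [exact: Hx| exact: Hy].
- move=> x Hx H HH HS. apply: sgV => //; exact: Hx.
Qed.
Lemma gen_in (S : G -> Prop) x : S x -> gen S x.
Proof. move=> Sx H _ HS; exact: HS. Qed.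
Lemma gen_min (S H : G -> Prop) : subgroup H -> (forall y, S y -> H y) -> forall x, gen S x -> H x.
Proof. move=> HH HS x Hx; exact: Hx. Qed.
Lemma gen_mono (S T : G -> Prop) : (forall y, S y -> gen T y) -> forall x, gen S x -> gen T x.
Proof. apply: gen_min; apply: gen_sub. Qed.
End GL.

Section Hom.
Variables G1 G2 : group.
Variable f : G1 -> G2.
Hypothesis Hf : is_hom f.

Lemma hom1 : f gone = gone.
Proof. apply: (mulg_canl (x:=f gone)). by rewrite -Hf !gmulx1. Qed.
Lemma homV x : f (ginv x) = ginv (f x).
Proof. apply inv_uniq. by rewrite -Hf gmulxV hom1. Qed.
Lemma homcomm x y : f (gcomm x y) = gcomm (f x) (f y).
Proof. by rewrite /gcomm !Hf !homV. Qed.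
Lemma hompow x n : f (gpow x n) = gpow (f x) n.
Proof. elim: n => [|n IH] /=; [exact hom1| by rewrite Hf IH]. Qed.

Lemma gen_img (S : G1 -> Prop) (T : G2 -> Prop) :
  (forall s, S s -> gen T (f s)) -> forall x, gen S x -> gen T (f x).
Proof.
move=> HS. apply: (gen_min (H:=fun x => gen T (f x))) => //.
split; [|split].
- rewrite hom1; apply (sg1 (gen_sub T)).
- move=> x y Hx Hy; rewrite Hf; by apply (sgM (gen_sub T)).
- move=> x Hx; rewrite homV; by apply (sgV (gen_sub T)).
Qed.

Lemma gen_lift (S : G1 -> Prop) (T : G2 -> Prop) :
  (forall z, T z -> exists x, f x = z /\ gen S x) ->
  forall z, gen T z -> exists x, f x = z /\ gen S x.
Proof.
move=> HT. apply: gen_min => //.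
split; [|split].
- exists gone; split; [exact hom1| apply (sg1 (gen_sub S))].
- move=> a b [x [<- Hx]] [y [<- Hy]]. exists (gmul x y); split; first by rewrite Hf.
  by apply (sgM (gen_sub S)).
- move=> a [x [<- Hx]]. exists (ginv x); split; first by rewrite homV.
  by apply (sgV (gen_sub S)).
Qed.

Lemma frat_img p (A : G1 -> Prop) (B : G2 -> Prop) s :
  (forall a, A a -> B (f a)) -> frat_gens p A s -> frat_gens p B (f s).
Proof.
move=> AB [[x [y [Ax [Ay ->]]]]|[x [Ax ->]]].
- left; exists (f x), (f y); split; [auto|split;[auto|]]; by rewrite homcomm.
- right; exists (f x); split; [auto|]; by rewrite hompow.
Qed.

Lemma gmf_img p (A : G1 -> Prop) (B : G2 -> Prop) l :
  (forall a, A a -> B (f a)) -> (forall y, B y -> exists x, A x /\ f x = y) ->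
  gens_mod_frat p A l -> gens_mod_frat p B (map f l).
Proof.
move=> AB BA [lA lgen]; split.
- move=> a /in_map_iff [x [<- Hx]]; auto.
- move=> y /BA [x [Ax <-]]. apply: gen_img (lgen x Ax).
  move=> s [Hs|Hs]; apply gen_in.
  + left; by apply in_map.
  + right; exact: frat_img Hs.
Qed.

Lemma lift_list : (forall z, exists x, f x = z) -> forall l, exists l', map f l' = l.
Proof.
move=> Hs; elim=> [|z l [l' Hl']]; first by exists nil.
case: (Hs z) => x Hx. exists (x :: l'); by rewrite /= Hx Hl'.
Qed.

Lemma index_preimage (K : G2 -> Prop) n : (forall z, exists x, f x = z) ->
  index K n -> index (fun x => K (f x)) n.
Proof.
move=> Hs [l [Hlen [Hcov Hd]]].
case: (lift_list Hs l) => l' Hl'.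
exists l'; split; [by rewrite -Hl' length_map in Hlen|split].
- move=> x. case: (Hcov (f x)) => y [Iy Ky].
  rewrite -Hl' in Iy. case/in_map_iff: Iy => y' [Ey Iy']. exists y'; split=>//.
  by rewrite Hf homV Ey.
- move=> i j Hi Hj Kij. apply Hd => //.
  by rewrite -Hl' -hom1 !map_nth -homV -Hf.
Qed.

Lemma index_image_sat (H : G1 -> Prop) n : (forall z, exists x, f x = z) ->
  (forall a h, H h -> f h = f a -> H a) ->
  index H n -> index (img f H) n.
Proof.
move=> Hs Hsat [l [Hlen [Hcov Hd]]].
exists (map f l); split; [by rewrite length_map|split].
- move=> y. case: (Hs y) => x <-. case: (Hcov x) => t [It Ht].
  exists (f t); split; first by apply in_map.
  exists (gmul (ginv t) x); split=>//. by rewrite Hf homV.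
- move=> i j Hi Hj. rewrite -hom1 !map_nth -homV -Hf. case=> h [Hh Eh].
  apply Hd => //. exact: Hsat Hh Eh.
Qed.
End Hom.

Lemma filterP {A} (P : A -> Prop) (C : list A) : exists L, forall z, In z L <-> In z C /\ P z.
Proof.
elim: C => [|c C [L HL]]; first by exists nil; simpl; tauto.
case: (classic (P c)) => Pc.
- exists (c :: L) => z /=. rewrite HL. split.
  + case=> [<-|[]]; tauto.
  + case=> [[<-|Hz] Pz]; tauto.
- exists L => z /=. rewrite HL. split; first tauto.
  case=> [[<-|Hz] Pz]; tauto.
Qed.

Lemma least_ex (P : nat -> Prop) : (exists n, P n) -> exists n, P n /\ forall m, P m -> n <= m.
Proof.
have: forall N k, k <= N -> P k -> exists n, P n /\ forall m, P m -> n <= m.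
  elim=> [|N IH] k Hk Pk.
  - exists k; split=>// m _. by move: Hk; rewrite leqn0 => /eqP ->.
  - case: (classic (exists j, j < k /\ P j)) => [[j [Hj Pj]]|Hno].
    + apply: (IH j) => //. rewrite -ltnS; exact: leq_trans Hj Hk.
    + exists k; split=>// m Pm. rewrite leqNgt. apply/negP=> Hmk. apply Hno; eauto.
move=> H [n Pn]; exact: (H n n).
Qed.

Lemma schreier (G : group) (H : G -> Prop) n : fin_gen G -> subgroup H -> index H n ->
  exists L, (forall a, In a L -> H a) /\ forall x, H x -> gen (fun y => In y L) x.
Proof.
move=> [S0 HS0] HH [T [_ [Hcov _]]].
pose S' := S0 ++ map ginv S0.
pose C := flat_map (fun s => flat_map (fun t => map (fun t' => gmul (ginv t') (gmul s t)) T) T) S' ++ T.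
have CW : forall s t t', In s S' -> In t T -> In t' T -> In (gmul (ginv t') (gmul s t)) C.
  move=> s t t' Is It It'. apply in_or_app; left. apply/in_flat_map; exists s; split=>//.
  apply/in_flat_map; exists t; split=>//. by apply: (in_map (fun t' => gmul (ginv t') (gmul s t))).
have CT : forall t, In t T -> In t C by move=> t It; apply in_or_app; right.
case: (filterP H C) => L HL.
exists L; split; first by move=> a /HL [].
pose M := gen (fun y => In y L).
have MH : forall x, M x -> H x.
  apply: gen_min => // y Hy. exact: (proj2 (proj1 (HL y) Hy)).
have HM : forall z, In z C -> H z -> M z by move=> z Cz Hz; apply gen_in; apply HL.
pose Q := fun x => forall t, In t T -> exists t', In t' T /\ M (gmul (ginv t') (gmul x t)).
have QS : forall s, In s S' -> Q s.
  move=> s Ss t Tt. case: (Hcov (gmul s t)) => t' [Tt' Ht']. exists t'; split; auto.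
have QM : forall x y, Q x -> Q y -> Q (gmul x y).
  move=> x y Qx Qy t Tt. case: (Qy t Tt) => t1 [T1 M1]. case: (Qx t1 T1) => t2 [T2 M2].
  exists t2; split; auto.
  have ->: gmul (ginv t2) (gmul (gmul x y) t) = gmul (gmul (ginv t2) (gmul x t1)) (gmul (ginv t1) (gmul y t)).
    by rewrite -!gmulA mulKVg.
  by apply (sgM (gen_sub _)).
have Q1 : Q gone.
  move=> t Tt; exists t; split; auto. rewrite gmul1x gmulVx. apply sg1, gen_sub.
have Qall : forall x, Q x /\ Q (ginv x).
  move=> x. refine (@gen_min _ (fun y => In y S0) (fun x => Q x /\ Q (ginv x)) _ _ x (HS0 x)).
  - split;[|split].
    + split; [|rewrite inv1]; exact Q1.
    + move=> a b [Qa Qa'] [Qb Qb']. split; first by apply QM. rewrite invMg. by apply QM.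
    + move=> a [Qa Qa']. split; auto. by rewrite invgK.
  - move=> y Sy. split; apply QS; rewrite /S'; apply in_or_app; [left|right]; auto.
    by apply in_map.
move=> h Hh. case: (Hcov gone) => t0 [T0 H0]. rewrite gmulx1 in H0.
case: (proj1 (Qall h) t0 T0) => t' [T' M'].
have Ht0 : H t0 by apply: sgVr.
have Ht' : H t'.
  apply: sgVr => //. rewrite -(mulgK (gmul h t0) (ginv t')).
  apply sgM => //; first by apply MH. apply sgV => //; by apply sgM.
have ->: h = gmul t' (gmul (gmul (ginv t') (gmul h t0)) (ginv t0)).
  by rewrite -!gmulA gmulxV gmulx1 mulKVg.
apply (sgM (gen_sub _)); first by apply gen_in, HL; split; auto.
apply (sgM (gen_sub _)) => //. apply (sgV (gen_sub _)). apply gen_in, HL; split; auto.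
Qed.
Lemma common_bound (I : Type) (le : I -> I -> Prop) (Htrans : forall i j k, le i j -> le j k -> le i k)
  (Htot : forall i j, le i j \/ le j i) (b : I) (X : Type) (R : X -> I -> Prop) (l : list X) :
  (forall g, In g l -> exists k, forall k', le k k' -> R g k') ->
  exists k, le b k /\ forall g, In g l -> forall k', le k k' -> R g k'.
Proof.
elim: l => [|g l IH] Hl.
- exists b; split; last by []. case: (Htot b b); auto.
- case: IH => [g' Ig'|k [Hbk Hk]]; first by apply Hl; right.
  case: (Hl g (in_eq g l)) => kg Hkg.
  case: (Htot k kg) => Hle.
  + exists kg; split; first by eauto.
    move=> g' [<-|Ig'] k' Hk'; first by auto. apply Hk => //; eauto.
  + exists k; split=>//. move=> g' [<-|Ig'] k' Hk'; last by auto. apply Hkg; eauto.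
Qed.

Theorem lemma3p4 (I : Type) (le : I -> I -> Prop) (i0 : I)
    (Hord : total_order_bot le i0)
    (G : I -> group) (pi : forall i j, G i -> G j)
    (Hsys : surj_direct_system le G pi)
    (Hfg : forall i, fin_gen (G i))
    (Ginf : group) (psi : forall i, G i -> Ginf)
    (Hlim : is_direct_limit le G pi Ginf psi)
    (p : nat) (Hp : prime p)
    (K : Ginf -> Prop) (HK : normal_sub K) (HKp : p_power_index p K) :
  exists H' : G i0 -> Prop,
    normal_sub H' /\ p_power_index p H' /\
    (forall z, K z <-> img (psi i0) H' z) /\
    (exists n, index K n /\
       eventually le (fun i => index (img (pi i0 i) H') n)) /\
    (exists n, dp p K n /\
       eventually le (fun i => dp p (img (pi i0 i) H') n)).
Proof.
case: Hord => [Hrefl [Hanti [Htrans [Htot Hbot]]]].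
case: Hsys => [Hhom [Hsurj [Hid Hcomp]]].
case: Hlim => [Hpsi [Hcompat [Hpsisurj Heq]]].
case: HK => [HKs HKn].
pose H' := fun x : G i0 => K (psi i0 x).
have psi0surj : forall z, exists x, psi i0 x = z.
  move=> z. case: (Hpsisurj z) => i [x <-]. case: (Hsurj i0 i (Hbot i) x) => x' <-.
  exists x'. by rewrite Hcompat.
have HH' : subgroup H'.
  split; [|split].
  - rewrite /H' hom1 //; exact: sg1.
  - move=> x y Hx Hy. rewrite /H' Hpsi. exact: sgM.
  - move=> x Hx. rewrite /H' homV //. exact: sgV.
pose A := fun i => img (pi i0 i) H'.
have Aup : forall i j, le i j -> forall a, A i a -> A j (pi i j a).
  move=> i j Hij a [x [Hx <-]]. exists x; split=>//. by rewrite Hcomp.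
have Adown : forall i j, le i j -> forall y, A j y -> exists x, A i x /\ pi i j x = y.
  move=> i j Hij y [x [Hx <-]]. exists (pi i0 i x); split; first by exists x.
  by rewrite Hcomp.
have AK : forall i a, A i a -> K (psi i a).
  move=> i a [x [Hx <-]]. by rewrite Hcompat.
have KA : forall i z, K z -> exists y, A i y /\ psi i y = z.
  move=> i z Kz. case: (psi0surj z) => x Ex. exists (pi i0 i x); split.
  - exists x; split=>//. by rewrite /H' Ex.
  - by rewrite Hcompat.
case: HKp => k Hk.
have IH' : index H' (p ^ k) by apply: index_preimage.
have IA : forall i, index (A i) (p ^ k).
  move=> i. apply: (index_image_sat (Hhom i0 i (Hbot i))) => //.
  - move=> z; exact: (Hsurj i0 i (Hbot i) z).
  - move=> a h Hh Eh. rewrite /H' -(Hcompat i0 i (Hbot i)) -Eh Hcompat //.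
exists H'; split.
  split=>// g x Hx. rewrite /H' !Hpsi homV //. exact: HKn.
split; first by exists k.
split.
  move=> z; split; last by case=> x [Hx <-].
  move=> Kz. case: (psi0surj z) => x Ex. exists x; split=>//. by rewrite /H' Ex.
split.
  exists (p ^ k); split=>//. exists i0 => i _. exact: IA.
case: (schreier (Hfg i0) HH' IH') => L0 [L0H L0gen].
pose P := fun n => exists i l, length l = n /\ gens_mod_frat p (A i) l.
have [m [[i1 [l1 [Hl1 Gl1]]] Hmin]] : exists m, P m /\ forall m', P m' -> m <= m'.
  apply: least_ex. exists (length (map (pi i0 i0) L0)), i0, (map (pi i0 i0) L0); split=>//.
  apply: (gmf_img (Hhom _ _ (Hrefl i0)) (A:=H')).
  - move=> a Ha; by exists a; split.
  - by move=> y [x [Hx <-]]; exists x.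
  - split=>// x Hx. apply: gen_mono (L0gen x Hx) => y Hy. apply gen_in; by left.
exists m; split; last first.
  exists i1 => i Hi. split.
  - exists (map (pi i1 i) l1); split; first by rewrite length_map.
    apply: (gmf_img (Hhom _ _ Hi)); [exact: Aup| exact: Adown| exact: Gl1].
  - move=> l Gl. apply Hmin. by exists i, l.
split.
  exists (map (psi i1) l1); split; first by rewrite length_map.
  apply: (gmf_img (Hpsi i1)); [exact: AK| exact: KA| exact: Gl1].
move=> l [lK lgen].
case: (lift_list psi0surj l) => lx Hlx.
have lxH : forall x, In x lx -> H' x.
  move=> x Ix. rewrite /H'. apply lK. rewrite -Hlx. by apply in_map.
pose S := fun w => In w lx \/ frat_gens p H' w.
have Rg : forall g, In g l1 -> exists kk, forall k', le kk k' ->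
    exists x, gen S x /\ pi i1 k' g = pi i0 k' x.
  move=> g Ig. have Ag := proj1 Gl1 g Ig.
  have [x [Ex Sx]] : exists x, psi i0 x = psi i1 g /\ gen S x.
    apply: (gen_lift (Hpsi i0)); last by apply lgen, AK.
    move=> z [Iz|[[a [b [Ka [Kb ->]]]]|[a [Ka ->]]]].
    - rewrite -Hlx in Iz. case/in_map_iff: Iz => x [<- Ix]. exists x; split=>//.
      apply gen_in; by left.
    - case: (psi0surj a) => a' Ea. case: (psi0surj b) => b' Eb.
      exists (gcomm a' b'); split; first by rewrite homcomm // Ea Eb.
      apply gen_in; right; left. exists a', b'; split; [by rewrite /H' Ea|split;[by rewrite /H' Eb|by []]].
    - case: (psi0surj a) => a' Ea.
      exists (gpow a' p); split; first by rewrite hompow // Ea.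
      apply gen_in; right; right. exists a'; split=>//. by rewrite /H' Ea.
  case: (proj1 (Heq i1 i0 g x) (Logic.eq_sym Ex)) => kk [H1 [H0 Ekk]].
  exists kk => k' Hk'. exists x; split=>//.
  by rewrite -(Hcomp i1 kk k') // -(Hcomp i0 kk k') // Ekk.
case: (@common_bound _ le Htrans Htot i1 _ _ l1 Rg) => K0 [H1K0 HK0].
have -> : length l = length (map (pi i0 K0) lx) by rewrite length_map -Hlx length_map.
apply Hmin. exists K0, (map (pi i0 K0) lx); split=>//. split.
- move=> a /in_map_iff [x [<- Ix]]. exists x; split; auto.
- move=> y Ay. case: (Adown i1 K0 H1K0 y Ay) => b [Ab <-].
  apply: (gen_img (Hhom i1 K0 H1K0)) ((proj2 Gl1) b Ab).
  move=> s [Is|Fs].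
  + case: (HK0 s Is K0 (Hrefl K0)) => x [Sx ->].
    apply: (gen_img (Hhom i0 K0 (Hbot K0))) Sx.
    move=> w [Iw|Fw]; apply gen_in.
    * left; by apply in_map.
    * right. apply: frat_img Fw; first exact: Hhom.
      move=> a Ha; by exists a; split.
  + apply gen_in; right. apply: frat_img Fs; [exact: Hhom| exact: Aup].
Qed.
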